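(* Let $y$ be a string over an alphabet $\Sigma$, let $a,b\in\Sigma$ and $x\in\Sigma^*$. Then $axb\in\mathrm{MAW}(y)$ if and only if all of the following hold: $x,ax\in\mathrm{Substr}(y)$; $x=\overleftarrow{x}$; $\mathrm{DAWG}(y)$ has the edge $([x]_R,b,[xb]_R)$; the suffix link of the node $[ax]_R$ leads to $[x]_R$; and the node $[ax]_R$ has no out-going edge labeled $b$.
   Context: $\mathrm{Substr}(y)$ is the set of substrings of $y$ (including the empty string). A string $w$ is a minimal absent word (MAW) of $y$ if $w\notin\mathrm{Substr}(y)$ but every proper substring of $w$ is in $\mathrm{Substr}(y)$; $\mathrm{MAW}(y)$ is the set of these. $\mathrm{EndPos}(x)=\{i\mid |x|\le i\le|y|,\ y[i-|x|+1..i]=x\}$; $u\equiv_R v$ iff $\mathrm{EndPos}(u)=\mathrm{EndPos}(v)$; $[x]_R$ is the class of $x$, and for $x\in\mathrm{Substr}(y)$, $\overleftarrow{x}$ is the longest element of $[x]_R$. $\mathrm{DAWG}(y)$ is the edge-labeled DAG with node set $\{[x]_R\mid x\in\mathrm{Substr}(y)\}$ and edge set $\{([x]_R,b,[xb]_R)\mid x,xb\in\mathrm{Substr}(y), b\in\Sigma\}$. Its suffix links are $\{([ax]_R,a,[x]_R)\mid x,ax\in\mathrm{Substr}(y), a\in\Sigma, [ax]_R\neq[x]_R\}$; each non-source node has exactly one out-going suffix link. *)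

(* Defs.v *)
From mathcomp Require Import all_boot.
Set Implicit Arguments. Unset Strict Implicit. Unset Printing Implicit Defensive.

Section Strings.
Variable T : eqType.
Implicit Types (y w u v x : seq T) (a b : T).

Definition substr w y : Prop := infix w y.

Definition maw y w : Prop :=
  ~ substr w y /\ (forall u, substr u w -> u <> w -> substr u y).

(* EndPos(x) = { i | |x| <= i <= |y|, y[i-|x|+1..i] = x } (1-indexed y);
   y[i-|x|+1..i] is the 0-indexed block take |x| (drop (i-|x|) y). *)
Definition endpos y x (i : nat) : Prop :=
  size x <= i <= size y /\ take (size x) (drop (i - size x) y) = x.

(* u ==_R v  iff  EndPos(u) = EndPos(v).  The node [u]_R is identified
   with the equivalence class, so [u]_R = [v]_R iff eqR y u v. *)
Definition eqR y u v : Prop := forall i, endpos y u i <-> endpos y v i.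

(* x is the longest element of [x]_R, i.e. x = <-x (for x in Substr(y)). *)
Definition is_longest_in_class y x : Prop :=
  forall u, eqR y u x -> size u <= size x.

(* ([X]_R, b, [Z]_R) belongs to the edge set
   { ([x']_R, b, [x'b]_R) | x', x'b in Substr(y) } of DAWG(y). *)
Definition dawg_edge y X b Z : Prop :=
  exists x', [/\ substr x' y, substr (rcons x' b) y,
                 eqR y x' X & eqR y (rcons x' b) Z].

(* ([U]_R, c, [V]_R) belongs to the suffix-link set
   { ([c x']_R, c, [x']_R) | x', c x' in Substr(y), [c x']_R <> [x']_R }. *)
Definition suffix_link y U c V : Prop :=
  exists x', [/\ substr x' y, substr (c :: x') y, ~ eqR y (c :: x') x',
                 eqR y (c :: x') U & eqR y x' V].

End Strings.

(* Main.v *)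
Require Import Defs.
From mathcomp Require Import all_boot.
From mathcomp Require Import zify.

Set Implicit Arguments. Unset Strict Implicit.
Section H.
Variable T : eqType.
Implicit Types (y w u v x p s : seq T) (a b : T).

Lemma endposE y x i : endpos y x i <-> exists p s, y = p ++ x ++ s /\ i = size p + size x.
Proof.
split.
- case=> /andP[h1 h2] h3.
  exists (take (i - size x) y), (drop i y); split; last first.
    rewrite size_takel; lia.
  rewrite -{1}(cat_take_drop (i - size x) y); congr (_ ++ _).
  rewrite -{1}(cat_take_drop (size x) (drop (i - size x) y)) h3 drop_drop.
  by have -> : size x + (i - size x) = i by lia.
- case=> [p [s [-> ->]]]; split.
    rewrite !size_cat; apply/andP; split; lia.
  have -> : size p + size x - size x = size p by lia.
  by rewrite drop_size_cat // take_size_cat.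
Qed.

Lemma infix_endpos y x : substr x y <-> exists i, endpos y x i.
Proof.
split.
- move/infixP=> [p [s ->]]; exists (size p + size x); apply/endposE; by exists p, s.
- case=> i /endposE [p [s [-> _]]]; apply/infixP; by exists p, s.
Qed.

Lemma cat_eq_size p1 s1 p2 s2 : p1 ++ s1 = p2 ++ s2 -> size p1 = size p2 -> p1 = p2 /\ s1 = s2.
Proof. move=> e hs; move/eqP: e; rewrite eqseq_cat // => /andP[/eqP -> /eqP ->]; by []. Qed.

Lemma cat_eq_sizer p1 s1 p2 s2 : p1 ++ s1 = p2 ++ s2 -> size s1 = size s2 -> p1 = p2 /\ s1 = s2.
Proof.
move=> e hs; apply: cat_eq_size => //.
have := congr1 size e; rewrite !size_cat; lia.
Qed.

Lemma suffix_longer p1 s1 p2 s2 : p1 ++ s1 = p2 ++ s2 -> size s1 <= size s2 ->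
  exists w, s2 = w ++ s1.
Proof.
move=> e hs; exists (take (size s2 - size s1) s2).
have hd : s2 = take (size s2 - size s1) s2 ++ drop (size s2 - size s1) s2 by rewrite cat_take_drop.
rewrite hd in e; rewrite catA in e.
have hsz : size s1 = size (drop (size s2 - size s1) s2) by rewrite size_drop; lia.
have [_ e2] := cat_eq_sizer e hsz; by rewrite {2}e2 cat_take_drop.
Qed.

Lemma endpos_two y u v i : endpos y u i -> endpos y v i -> size u <= size v -> exists w, v = w ++ u.
Proof.
move=> /endposE [p [s [e1 i1]]] /endposE [q [t [e2 i2]]] hs.
rewrite e1 !catA in e2.
have [e3 _] := cat_eq_size e2 (ltac:(rewrite !size_cat; lia)).
exact: (suffix_longer e3).
Qed.

Lemma L_ext y u v b : substr (rcons u b) y -> (forall i, endpos y u i -> endpos y v i) ->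
  substr (rcons v b) y.
Proof.
move=> /infixP [p [s e]] H.
have : endpos y u (size p + size u) by apply/endposE; exists p, (b :: s); split => //; rewrite e; congr (_ ++ _); by rewrite -cats1 -catA.
move/H/endposE=> [q [t [e2 i2]]].
have e' : (p ++ u) ++ (b :: s) = (q ++ v) ++ t by rewrite -!catA -e2 e -cats1 -catA.
have [e3 e4] := cat_eq_size e' (ltac:(rewrite !size_cat; lia)).
apply/infixP; exists q, s; rewrite e2 -e4; by rewrite -cats1 -catA.
Qed.

Lemma proper_infix a x b u : substr u (a :: rcons x b) -> u <> a :: rcons x b ->
  substr u (a :: x) \/ substr u (rcons x b).
Proof.
move=> /infixP [p [s e]] ne.
case: p e => [|c p'] e.
- case/lastP: s e => [|s' c] e.
  + by rewrite cats0 /= in e; case: ne.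
  + left; apply/infixP; exists [::], s'.
    move: e; rewrite /= -rcons_cons -rcons_cat => /rcons_inj [-> _]; by [].
- right; apply/infixP; exists p', s; by case: e.
Qed.

End H.

Theorem lemma9 (T : eqType) (y : seq T) (a b : T) (x : seq T) :
  maw y (a :: rcons x b) <->
  (substr x y /\ substr (a :: x) y /\
   is_longest_in_class y x /\
   dawg_edge y x b (rcons x b) /\
   (exists c, suffix_link y (a :: x) c x) /\
   ~ (exists Z, dawg_edge y (a :: x) b Z)).
Proof.
Proof.
have refl : forall u, eqR y u u by move=> u i.
split.
- case=> hn hp.
  have neq : forall u, size u <= size x + 1 -> u <> a :: rcons x b.
    move=> u hu e; move: hu; rewrite e /= size_rcons; lia.
  have hax : substr (a :: x) y.
    apply: hp; last by apply: neq => /=; lia.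
    apply/infixP; exists [::], [:: b]; by rewrite /= cats1.
  have hxb : substr (rcons x b) y.
    apply: hp; last by apply: neq; rewrite size_rcons; lia.
    apply/infixP; exists [:: a], [::]; by rewrite /= cats0.
  have hx : substr x y by apply: infix_trans (infix_cons _ _) hax.
  have hnotR : ~ eqR y (a :: x) x.
    move=> H; apply: hn; rewrite -rcons_cons; apply: (L_ext hxb) => i; exact: (H i).2.
  split => //; split => //; split; last split; last split.
  + move=> u Hu; case: (leqP (size u) (size x)) => // hlt; exfalso.
    have [i hi] := (infix_endpos _ _).1 hx.
    have [w ew] := endpos_two hi ((Hu i).2 hi) (ltnW hlt).
    case/lastP: w ew => [|w' c] ew; first by move: hlt; rewrite ew /=; lia.
    have hc : eqR y (c :: x) x.
      move=> j; split.
      * case/endposE=> [p [s [e1 e2]]]; apply/endposE; exists (rcons p c), s; split.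
          by rewrite e1 -cats1 -catA.
        by rewrite e2 size_rcons /=; lia.
      * move/(Hu j).2/endposE=> [p [s [e1 e2]]]; apply/endposE; exists (p ++ w'), s; split.
          by rewrite e1 ew -cats1 -!catA.
        by rewrite e2 ew size_cat size_cat size_rcons /=; lia.
    have [j hj] := (infix_endpos _ _).1 hax.
    have hj' := hj; move/endposE: hj' => [p [s [e1 e2]]].
    have hjx : endpos y x j by apply/endposE; exists (rcons p a), s; split; [by rewrite e1 -cats1 -catA | rewrite e2 size_rcons /=; lia].
    move/(hc j).2/endposE: hjx => [q [t [e3 e4]]].
    have [_ e5] := cat_eq_size (etrans (esym e1) e3) (ltac:(move: e2 e4 => /= ; lia)).
    case: e5 => ec _; subst c.
    exact: hnotR hc.
  + exists x; split => //.
  + exists a, x; split => //.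
  + case=> Z [x' [h1 h2 h3 h4]]; apply: hn; rewrite -rcons_cons.
    apply: (L_ext h2) => i; exact: (h3 i).1.
- case=> hx [hax [_ [[x' [h1 h2 h3 h4]] [_ hno]]]].
  have hxb : substr (rcons x b) y by apply: (L_ext h2) => i; exact: (h3 i).1.
  split.
  + move=> hs; apply: hno; exists (rcons (a :: x) b), (a :: x); split => //.
  + move=> u hu hne; case: (proper_infix hu hne) => h.
    * exact: infix_trans h hax.
    * exact: infix_trans h hxb.
Qed.
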